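(* Let $\mathcal{G}\subseteq\mathcal{G}'$ be two building sets of the lattice of flats $\mathcal{L}$ of the same loopless matroid. If $\mathcal{G}'$ is flag, then there exists a binary filtration of $\mathcal{G}'$ from $\mathcal{G}$, i.e. a sequence of building sets $\mathcal{G}=\mathcal{G}_p\subsetneq\mathcal{G}_{p-1}\subsetneq\dots\subsetneq\mathcal{G}_0=\mathcal{G}'$ of $\mathcal{L}$ such that for each $i$, $\mathcal{G}_i\setminus\mathcal{G}_{i+1}$ consists of a single element $G$, and $G$ has exactly two factors in $\mathcal{G}_{i+1}$ (i.e. $\max(\mathcal{G}_{i+1})_{\leqslant G}$ has exactly two elements).
   Context: A building set of $\mathcal{L}$ is $\mathcal{H}\subseteq\mathcal{L}\setminus\{\hat0\}$ such that for every $F\neq\hat0$, with $\max\mathcal{H}_{\leqslant F}$ the maximal elements of $\{H\in\mathcal{H}:H\leqslant F\}$ (the $\mathcal{H}$-factors of $F$), the join map $\prod_{H\in\max\mathcal{H}_{\leqslant F}}[\hat0,H]\to[\hat0,F]$ is a poset isomorphism. $\mathcal{S}\subseteq\mathcal{H}$ is nested if for every antichain $A\subseteq\mathcal{S}$ and $\{S_1,\dots,S_k\}\subseteq A$, $k\geqslant2$, $S_1\vee\dots\vee S_k\notin\mathcal{H}$. $\mathcal{H}$ is flag if the simplicial complex of nested sets contained in $\mathcal{H}\setminus\max\mathcal{H}$ is flag (all minimal non-faces have size $2$). *)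

(* Defs.v *)
From mathcomp Require Import all_boot.
Set Implicit Arguments. Unset Strict Implicit. Unset Printing Implicit Defensive.

Section Matroid.
Variable E : finType.
Implicit Types (I : {set {set E}}) (A B X Y F : {set E}) (H S T : {set {set E}}).

Definition is_matroid I : Prop :=
  [/\ set0 \in I,
      (forall A B, B \in I -> A \subset B -> A \in I) &
      (forall A B, A \in I -> B \in I -> #|A| < #|B| ->
         exists2 e, e \in B :\: A & e |: A \in I)].

Definition loopless I : Prop := forall e : E, [set e] \in I.

Definition mrank I A : nat := \max_(B in I | B \subset A) #|B|.

Definition mcl I A : {set E} := [set e | mrank I (e |: A) == mrank I A].

Definition flat I A : bool := mcl I A == A.

Definition hat0 I : {set E} := mcl I set0.

Definition ljoin I S : {set E} := mcl I (\bigcup_(X in S) X).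

Definition factors H F : {set {set E}} :=
  [set X in H | (X \subset F) &&
     [forall Y in H, ((Y \subset F) && (X \subset Y)) ==> (Y == X)]].

Definition maxel H : {set {set E}} :=
  [set X in H | [forall Y in H, (X \subset Y) ==> (Y == X)]].

(* Elements of prod_{H in M} [\hat0, H], represented as functions
   (values outside M irrelevant). *)
Definition admissible I (M : {set {set E}}) (x : {set E} -> {set E}) : Prop :=
  forall X, X \in M -> flat I (x X) /\ x X \subset X.

Definition join_fam I (M : {set {set E}}) (x : {set E} -> {set E}) : {set E} :=
  mcl I (\bigcup_(X in M) x X).

(* Building set: H subset of L \ {\hat0}, and for each flat F <> \hat0 the join map
   prod_{X in max H_{<=F}} [\hat0, X] -> [\hat0, F] is a poset isomorphism
   (surjective, and x <= y iff join x <= join y). *)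
Definition building I H : Prop :=
  (forall X, X \in H -> flat I X /\ X <> hat0 I) /\
  (forall F, flat I F -> F <> hat0 I ->
     let M := factors H F in
     (forall Y, flat I Y -> Y \subset F ->
        exists x, admissible I M x /\ join_fam I M x = Y) /\
     (forall x y, admissible I M x -> admissible I M y ->
        (join_fam I M x \subset join_fam I M y <->
         (forall X, X \in M -> x X \subset y X)))).

Definition antichain S : Prop :=
  forall X Y, X \in S -> Y \in S -> X \subset Y -> X = Y.

Definition nested I H S : Prop :=
  S \subset H /\
  forall (Ac : {set {set E}}), Ac \subset S -> antichain Ac ->
    forall T, T \subset Ac -> 2 <= #|T| -> ljoin I T \notin H.

(* Flag: every minimal non-face of the complex of nested sets contained
   in H \ max H has size 2. *)
Definition flag I H : Prop :=
  forall S, S \subset H :\: maxel H -> ~ nested I H S ->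
    (forall T, T \proper S -> nested I H T) -> #|S| = 2.

Definition binary_filtration I (G G' : {set {set E}}) : Prop :=
  exists (p : nat) (Gs : nat -> {set {set E}}),
    [/\ Gs p = G, Gs 0 = G',
        (forall i, i <= p -> building I (Gs i)) &
        (forall i, i < p ->
           Gs i.+1 \subset Gs i /\
           exists X, Gs i :\: Gs i.+1 = [set X] /\ #|factors (Gs i.+1) X| = 2)].

End Matroid.

(* Main.v *)
Require Import Defs.
From mathcomp Require Import all_boot.
Set Implicit Arguments. Unset Strict Implicit. Unset Printing Implicit Defensive.

Lemma r_le (E : finType) (I : {set {set E}}) (A B : {set E}) :
  B \in I -> B \subset A -> #|B| <= mrank I A.
Proof.
move=> hB hBA; rewrite /mrank.
by apply: (@leq_bigmax_cond _ (fun C => (C \in I) && (C \subset A)) (fun C => #|C|) B); rewrite hB.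
Qed.

Lemma r_wit (E : finType) (I : {set {set E}}) (hM : is_matroid I) (A : {set E}) :
  exists B, [/\ B \in I, B \subset A & #|B| = mrank I A].
Proof.
case: hM => h0 _ _.
have hp : 0 < #|[pred B : {set E} | (B \in I) && (B \subset A)]|.
  by apply/card_gt0P; exists set0; rewrite inE h0 sub0set.
case: (eq_bigmax_cond (fun B : {set E} => #|B|) hp) => B.
rewrite inE => /andP [hB hBA] he; by exists B; split => //; rewrite /mrank -he.
Qed.

Lemma r_mono (E : finType) (I : {set {set E}}) (hM : is_matroid I) (A B : {set E}) :
  A \subset B -> mrank I A <= mrank I B.
Proof.
move=> hAB; case: (r_wit hM A) => C [hC hCA <-].
by apply: r_le => //; apply: subset_trans hAB.
Qed.

Lemma r_extend (E : finType) (I : {set {set E}}) (hM : is_matroid I) (A B : {set E}) :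
  B \in I -> B \subset A ->
  exists B', [/\ B' \in I, B \subset B', B' \subset A & #|B'| = mrank I A].
Proof.
move=> hB hBA.
have [n hn] : exists n, mrank I A - #|B| = n by eexists.
elim: n B hB hBA hn => [|n IH] B hB hBA hn.
  exists B; split => //; apply/eqP; rewrite eqn_leq r_le //=.
  by move/eqP: hn; rewrite subn_eq0.
case: (r_wit hM A) => W [hW hWA hWc].
have hlt : #|B| < #|W| by rewrite hWc; rewrite -subn_gt0 hn.
case: hM => _ _ haug.
case: (haug _ _ hB hW hlt) => e; rewrite inE => /andP [heB heW] heI.
have hsub : e |: B \subset A by rewrite subUset sub1set (subsetP hWA) // hBA.
have hc : #|e |: B| = #|B|.+1 by rewrite cardsU1 heB.
case: (IH (e |: B) heI hsub) => [|B' [h1 h2 h3 h4]].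
  by rewrite hc subnS hn.
exists B'; split => //; apply: subset_trans h2; exact: subsetUr.
Qed.

Lemma r_submod (E : finType) (I : {set {set E}}) (hM : is_matroid I) (X Y : {set E}) :
  mrank I (X :|: Y) + mrank I (X :&: Y) <= mrank I X + mrank I Y.
Proof.
case: (r_wit hM (X :&: Y)) => B [hB hBXY <-].
have hBU : B \subset X :|: Y by apply: (subset_trans hBXY); apply: (subset_trans (subsetIl X Y) (subsetUl X Y)).
case: (r_extend hM hB hBU) => B' [hB' hBB' hB'U <-].
have hsub : forall C : {set E}, C \subset B' -> C \in I.
  by move=> C hC; case: hM => _ hd _; apply: hd hB' hC.
have e1 : (B' :&: X) :|: (B' :&: Y) = B' by rewrite -setIUr; apply/setIidPl.
have e2 : #|B| <= #|(B' :&: X) :&: (B' :&: Y)|.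
  apply: subset_leq_card; rewrite subsetI !subsetI hBB'.
  by move: hBXY; rewrite subsetI => /andP [-> ->].
have := cardsUI (B' :&: X) (B' :&: Y); rewrite e1 => hc.
have h1 : #|B' :&: X| <= mrank I X by apply: r_le; [apply: hsub; apply: subsetIl | apply: subsetIr].
have h2 : #|B' :&: Y| <= mrank I Y by apply: r_le; [apply: hsub; apply: subsetIl | apply: subsetIr].
apply: leq_trans (leq_add h1 h2); rewrite -hc; exact: leq_add.
Qed.

Lemma in_mcl (E : finType) (I : {set {set E}}) (A : {set E}) e :
  (e \in mcl I A) = (mrank I (e |: A) == mrank I A).
Proof. by rewrite /mcl inE. Qed.

Lemma mcl_ext (E : finType) (I : {set {set E}}) (A : {set E}) : A \subset mcl I A.
Proof.
apply/subsetP => e he; rewrite in_mcl.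
by have -> : e |: A = A by apply/setUidPr; rewrite sub1set.
Qed.

Lemma mcl_mono (E : finType) (I : {set {set E}}) (hM : is_matroid I) (A B : {set E}) :
  A \subset B -> mcl I A \subset mcl I B.
Proof.
move=> hAB; apply/subsetP => e; rewrite !in_mcl => /eqP he.
have h := r_submod hM B (e |: A).
have hU : B :|: (e |: A) = e |: B.
  by rewrite setUCA; congr (_ :|: _); apply/setUidPl.
have hI : A \subset B :&: (e |: A) by rewrite subsetI hAB subsetUr.
have h2 := r_mono hM hI.
rewrite hU he in h.
rewrite eqn_leq (r_mono hM (subsetUr _ B)) andbT.
by rewrite -(leq_add2r (mrank I A)); apply: leq_trans h; rewrite leq_add2l.
Qed.

Lemma r_mcl (E : finType) (I : {set {set E}}) (hM : is_matroid I) (A : {set E}) :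
  mrank I (mcl I A) = mrank I A.
Proof.
apply/eqP; rewrite eqn_leq (r_mono hM (mcl_ext I A)) andbT.
rewrite leqNgt; apply/negP => hlt.
case: (r_wit hM A) => B [hB hBA hBc].
case: (r_wit hM (mcl I A)) => W [hW hWA hWc].
have hlt' : #|B| < #|W| by rewrite hBc hWc.
have hM' := hM; case: hM' => _ _ haug.
case: (haug _ _ hB hW hlt') => e; rewrite inE => /andP [heB heW] heI.
have : e \in mcl I A by apply: (subsetP hWA).
rewrite in_mcl => /eqP he.
have : #|e |: B| <= mrank I (e |: A).
  by apply: r_le => //; apply: setUS.
by rewrite he cardsU1 heB -hBc ltnn.
Qed.

Lemma mcl_idem (E : finType) (I : {set {set E}}) (hM : is_matroid I) (A : {set E}) :
  mcl I (mcl I A) = mcl I A.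
Proof.
apply/eqP; rewrite eqEsubset mcl_ext andbT.
apply/subsetP => e; rewrite !in_mcl r_mcl // => /eqP he.
rewrite eqn_leq (r_mono hM (subsetUr _ A)) andbT.
by rewrite -he; apply: r_mono => //; apply: setUS; apply: mcl_ext.
Qed.

Lemma mclE (E : finType) (I : {set {set E}}) (F : {set E}) : flat I F -> mcl I F = F.
Proof. by move/eqP. Qed.

Lemma flat_mcl (E : finType) (I : {set {set E}}) (hM : is_matroid I) (A : {set E}) :
  flat I (mcl I A).
Proof. by apply/eqP; apply: mcl_idem. Qed.

Lemma mcl_sub (E : finType) (I : {set {set E}}) (hM : is_matroid I) (A B : {set E}) :
  A \subset mcl I B -> mcl I A \subset mcl I B.
Proof. by move=> h; rewrite -(mcl_idem hM B); apply: mcl_mono. Qed.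

Lemma mcl_min (E : finType) (I : {set {set E}}) (hM : is_matroid I) (A F : {set E}) :
  A \subset F -> flat I F -> mcl I A \subset F.
Proof. by move=> h hF; rewrite -(mclE hF); apply: mcl_mono. Qed.

Lemma hat0_flat (E : finType) (I : {set {set E}}) (hM : is_matroid I) : flat I (hat0 I).
Proof. exact: flat_mcl. Qed.

Lemma hat0_sub (E : finType) (I : {set {set E}}) (hM : is_matroid I) (F : {set E}) :
  flat I F -> hat0 I \subset F.
Proof. by move=> hF; apply: mcl_min => //; apply: sub0set. Qed.

Lemma jf_sub (E : finType) (I : {set {set E}}) (M : {set {set E}}) (x : {set E} -> {set E}) Z :
  Z \in M -> x Z \subset join_fam I M x.
Proof.
move=> hZ; apply: subset_trans (mcl_ext _ _).
exact: (@bigcup_sup _ _ Z (fun W => W \in M) x hZ).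
Qed.

Lemma jf_le (E : finType) (I : {set {set E}}) (hM : is_matroid I) (M M' : {set {set E}}) (x y : {set E} -> {set E}) :
  (forall Z, Z \in M -> x Z \subset join_fam I M' y) -> join_fam I M x \subset join_fam I M' y.
Proof.
move=> h; apply: mcl_sub => //; apply/bigcupsP => Z hZ; exact: h.
Qed.

Lemma jf_mono (E : finType) (I : {set {set E}}) (hM : is_matroid I) (M : {set {set E}}) (x y : {set E} -> {set E}) :
  (forall Z, Z \in M -> x Z \subset y Z) -> join_fam I M x \subset join_fam I M y.
Proof.
move=> h; apply: jf_le => // Z hZ; apply: subset_trans (h Z hZ) _; exact: jf_sub.
Qed.

Lemma factorsP (E : finType) (H : {set {set E}}) (F Z : {set E}) :
  reflect [/\ Z \in H, Z \subset F &
           forall Y, Y \in H -> Y \subset F -> Z \subset Y -> Y = Z]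
          (Z \in factors H F).
Proof.
rewrite /factors inE; apply: (iffP idP).
  move=> /andP [hZ /andP [hZF /forall_inP h]]; split => // Y hY hYF hZY.
  by apply/eqP; move: (h Y hY); rewrite hYF hZY.
move=> [hZ hZF h]; rewrite hZ hZF /=; apply/forall_inP => Y hY.
by apply/implyP => /andP [h1 h2]; rewrite (h Y hY h1 h2).
Qed.

Lemma fac_anti (E : finType) (H : {set {set E}}) (F P Q : {set E}) :
  P \in factors H F -> Q \in factors H F -> P \subset Q -> P = Q.
Proof.
move=> /factorsP [hP hPF h] /factorsP [hQ hQF _] hPQ.
by symmetry; apply: h.
Qed.

Lemma below_fac (E : finType) (H : {set {set E}}) (F Y : {set E}) :
  Y \in H -> Y \subset F -> exists2 Z, Z \in factors H F & Y \subset Z.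
Proof.
move=> hY hYF.
pose P := fun Z : {set E} => [&& Z \in H, Y \subset Z & Z \subset F].
have hP : P Y by rewrite /P hY subxx hYF.
case: (@arg_maxnP _ Y P (fun Z => #|Z|) hP) => Z /and3P [hZ hYZ hZF] hmax.
exists Z => //; apply/factorsP; split => // W hW hWF hZW.
apply/eqP; rewrite eq_sym eqEcard hZW /=.
apply: hmax; rewrite /P hW hWF andbT; exact: subset_trans hYZ hZW.
Qed.

Lemma bld_elt (E : finType) (I : {set {set E}}) (H : {set {set E}}) (hH : building I H) X :
  X \in H -> flat I X /\ X <> hat0 I.
Proof. by case: hH => h _; apply: h. Qed.

Lemma bld_surj (E : finType) (I : {set {set E}}) (H : {set {set E}}) (hH : building I H) F :
  flat I F -> F <> hat0 I -> forall Y, flat I Y -> Y \subset F ->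
  exists x, admissible I (factors H F) x /\ join_fam I (factors H F) x = Y.
Proof. by case: hH => _ h hF hF0; case: (h F hF hF0). Qed.

Lemma bld_refl (E : finType) (I : {set {set E}}) (H : {set {set E}}) (hH : building I H) F :
  flat I F -> F <> hat0 I -> forall x y,
  admissible I (factors H F) x -> admissible I (factors H F) y ->
  join_fam I (factors H F) x \subset join_fam I (factors H F) y ->
  forall X, X \in factors H F -> x X \subset y X.
Proof.
case: hH => _ h hF hF0 x y hx hy hxy; case: (h F hF hF0) => _ h2.
exact: ((h2 x y hx hy).1 hxy).
Qed.

Lemma fac_inH (E : finType) (H : {set {set E}}) (F Z : {set E}) :
  Z \in factors H F -> Z \in H.
Proof. by case/factorsP. Qed.

Lemma fac_subF (E : finType) (H : {set {set E}}) (F Z : {set E}) :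
  Z \in factors H F -> Z \subset F.
Proof. by case/factorsP. Qed.

Lemma fac_join (E : finType) (I : {set {set E}}) (hM : is_matroid I) (H : {set {set E}})
  (hH : building I H) F :
  flat I F -> F <> hat0 I -> join_fam I (factors H F) (fun Z => Z) = F.
Proof.
move=> hF hF0.
case: (bld_surj hH hF hF0 hF (subxx F)) => x [hx hxF].
apply/eqP; rewrite eqEsubset; apply/andP; split.
  by apply: mcl_min => //; apply/bigcupsP => Z hZ; apply: fac_subF hZ.
rewrite -{1}hxF; apply: jf_mono => // Z hZ; exact: (hx Z hZ).2.
Qed.

Lemma eq_hat0 (E : finType) (I : {set {set E}}) (hM : is_matroid I) Z :
  flat I Z -> Z \subset hat0 I -> Z = hat0 I.
Proof. by move=> hZ h; apply/eqP; rewrite eqEsubset h hat0_sub. Qed.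

Lemma fac_disj (E : finType) (I : {set {set E}}) (hM : is_matroid I) (H : {set {set E}})
  (hH : building I H) F P Q Z :
  flat I F -> F <> hat0 I -> P \in factors H F -> Q \in factors H F -> P != Q ->
  flat I Z -> Z \subset P -> Z \subset Q -> Z = hat0 I.
Proof.
move=> hF hF0 hP hQ hPQ hZ hZP hZQ.
pose x := fun W => if W == P then Z else hat0 I.
pose y := fun W => if W == Q then Z else hat0 I.
have adm : forall R, R \in factors H F -> Z \subset R ->
    admissible I (factors H F) (fun W => if W == R then Z else hat0 I).
  move=> R hR hZR W hW; case: ifP => [/eqP -> | _]; first by [].
  split; first exact: hat0_flat.
  by apply: hat0_sub => //; apply: (bld_elt hH (fac_inH hW)).1.
have := bld_refl hH hF hF0 (adm P hP hZP) (adm Q hQ hZQ).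
move=> h.
have hj : join_fam I (factors H F) (fun W => if W == P then Z else hat0 I) \subset
          join_fam I (factors H F) (fun W => if W == Q then Z else hat0 I).
  apply: jf_le => // W hW; case: ifP => _.
    by have := jf_sub I (fun W => if W == Q then Z else hat0 I) hQ; rewrite eqxx.
  by apply: hat0_sub => //; apply: flat_mcl.
have := h hj P hP; rewrite eqxx (negbTE hPQ) => h'.
exact: eq_hat0.
Qed.

Lemma fac_all (E : finType) (I : {set {set E}}) (hM : is_matroid I) (H : {set {set E}})
  (hH : building I H) F (S : {set {set E}}) :
  flat I F -> F <> hat0 I -> S \subset factors H F ->
  F \subset join_fam I S (fun Z => Z) -> S = factors H F.
Proof.
move=> hF hF0 hS hFS; apply/eqP; rewrite eqEsubset hS /=; apply/subsetP => Z hZ.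
case: (boolP (Z \in S)) => // hZS; exfalso.
pose y := fun W => if W \in S then W else hat0 I.
have admx : admissible I (factors H F) (fun W => W).
  by move=> W hW; split => //; exact: (bld_elt hH (fac_inH hW)).1.
have admy : admissible I (factors H F) y.
  move=> W hW; rewrite /y; case: ifP => _; first by split => //; exact: (bld_elt hH (fac_inH hW)).1.
  split; first exact: hat0_flat.
  by apply: hat0_sub => //; apply: (bld_elt hH (fac_inH hW)).1.
have hj : join_fam I (factors H F) (fun W => W) \subset join_fam I (factors H F) y.
  rewrite (fac_join hM hH hF hF0); apply: subset_trans hFS _; apply: jf_le => // W hW.
  by have := jf_sub I y (subsetP hS W hW); rewrite /y hW.
have := bld_refl hH hF hF0 admx admy hj hZ; rewrite /y (negbTE hZS) => h.
have [hZf hZ0] := bld_elt hH (fac_inH hZ).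
by apply: hZ0; apply: eq_hat0.
Qed.

Lemma bld_join (E : finType) (I : {set {set E}}) (hM : is_matroid I) (H : {set {set E}})
  (hH : building I H) P Q Z :
  P \in H -> Q \in H -> flat I Z -> Z <> hat0 I -> Z \subset P -> Z \subset Q ->
  mcl I (P :|: Q) \in H.
Proof.
move=> hP hQ hZ hZ0 hZP hZQ.
set J := mcl I (P :|: Q).
have hJ : flat I J by apply: flat_mcl.
have hPJ : P \subset J by apply: subset_trans (subsetUl P Q) (mcl_ext _ _).
have hQJ : Q \subset J by apply: subset_trans (subsetUr P Q) (mcl_ext _ _).
have hJ0 : J <> hat0 I.
  move=> e; have [hPf hP0] := bld_elt hH hP; apply: hP0; apply: eq_hat0 => //.
  by rewrite -e.
case: (below_fac hP hPJ) => P' hP' hPP'.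
case: (below_fac hQ hQJ) => Q' hQ' hQQ'.
case: (eqVneq P' Q') => [e | hne]; last first.
  exfalso; apply: hZ0; apply: (fac_disj hM hH hJ hJ0 hP' hQ' hne hZ).
    exact: subset_trans hZP hPP'.
  exact: subset_trans hZQ hQQ'.
subst Q'.
have hK := fac_inH hP'.
suff -> : J = P' by [].
apply/eqP; rewrite eqEsubset (fac_subF hP') andbT.
rewrite /J; apply: mcl_min => //; last by exact: (bld_elt hH hK).1.
by rewrite subUset hPP' hQQ'.
Qed.

Lemma lt_card_sub (E : finType) (A B : {set E}) : A \subset B -> A != B -> #|A| < #|B|.
Proof. by move=> h1 h2; apply: proper_card; rewrite properEneq h1 h2. Qed.

Lemma fac_ge2 (E : finType) (I : {set {set E}}) (hM : is_matroid I) (G : {set {set E}})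
  (hG : building I G) X :
  flat I X -> X <> hat0 I -> X \notin G -> 2 <= #|factors G X|.
Proof.
move=> hX hX0 hXG.
have hj := fac_join hM hG hX hX0.
case e0 : #|factors G X| => [|[|n]] //.
  move/eqP: e0; rewrite cards_eq0 => /eqP e0.
  by exfalso; rewrite e0 /join_fam big_set0 in hj; apply: hX0; rewrite -hj.
exfalso; have /cards1P [A eA] : #|factors G X| == 1 by rewrite e0.
have hA : A \in factors G X by rewrite eA set11.
rewrite eA /join_fam big_set1 in hj.
rewrite (mclE (bld_elt hG (fac_inH hA)).1) in hj.
by move: hXG; rewrite -hj (fac_inH hA).
Qed.

Lemma two_factors_min (E : finType) (I : {set {set E}}) (hM : is_matroid I)
  (G G' : {set {set E}}) (hG : building I G) (hG' : building I G') (hsub : G \subset G')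
  (hflag : flag I G') X :
  X \in G' :\: G -> (forall Y, Y \in G' :\: G -> #|X| <= #|Y|) -> #|factors G X| = 2.
Proof.
rewrite inE => /andP [hXG hX'] hmin.
have [hXf hX0] := bld_elt hG' hX'.
set S := factors G X.
have h2 := fac_ge2 hM hG hXf hX0 hXG.
apply/eqP; rewrite eqn_leq h2 andbT leqNgt; apply/negP => h3.
pose Pd := fun T : {set {set E}} => [&& T \subset S, 2 <= #|T| & ljoin I T \in G'].
have hPS : Pd S.
  rewrite /Pd subxx h2 /=.
  have -> : ljoin I S = X by exact: (fac_join hM hG hXf hX0).
  exact: hX'.
case: (@arg_minnP _ S Pd (fun T => #|T|) hPS) => T0 /and3P [hT0S hT02 hT0G] hT0min.
have hSG' : forall Z, Z \in S -> Z \in G'.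
  by move=> Z hZ; apply: (subsetP hsub); apply: fac_inH hZ.
have hc : #|T0| = 2.
  apply: hflag.
  - apply/subsetP => Z hZ; have hZS := subsetP hT0S Z hZ.
    rewrite inE (hSG' Z hZS) andbT /maxel inE (hSG' Z hZS) /=.
    apply/negP => /forall_inP h; have := h X hX'; rewrite (fac_subF hZS) /= => /eqP e.
    by move: hXG; rewrite e (fac_inH hZS).
  - move=> [_ hn].
    have hac : antichain T0 by move=> P Q hP hQ; apply: fac_anti; exact: (subsetP hT0S).
    by move: (hn T0 (subxx _) hac T0 (subxx _) hT02); rewrite hT0G.
  - move=> T hT; split.
      apply/subsetP => Z hZ; apply: hSG'; apply: (subsetP hT0S).
      by apply: (subsetP (proper_sub hT)).
    move=> Ac hAc _ T' hT' hT'2; apply/negP => hT'G.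
    have hT'T : T' \subset T := subset_trans hT' hAc.
    have : Pd T'.
      rewrite /Pd hT'2 hT'G !andbT; apply: (subset_trans hT'T).
      exact: (subset_trans (proper_sub hT) hT0S).
    move/hT0min => h; have := proper_card hT; have := subset_leq_card hT'T.
    move=> a b; have := leq_ltn_trans (leq_trans h a) b; by rewrite ltnn.
move/eqP: hc => /cards2P [P [Q [hPQ eT0]]].
set Y := ljoin I T0.
have hYX : Y \subset X.
  apply: mcl_min => //; apply/bigcupsP => Z hZ; apply: fac_subF; exact: (subsetP hT0S).
have hYne : Y != X.
  apply/negP => /eqP e.
  have eS : T0 = S by apply: (fac_all hM hG hXf hX0 hT0S); rewrite -e subxx.
  by move: h3; rewrite -eS eT0 cards2 hPQ.
have hYG : Y \in G.
  have := hmin Y; rewrite inE hT0G andbT.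
  case: (boolP (Y \in G)) => // hYn /(_ isT); rewrite leqNgt.
  by rewrite (lt_card_sub hYX hYne).
have hP : P \in S by apply: (subsetP hT0S); rewrite eT0 !inE eqxx.
have hQ : Q \in S by apply: (subsetP hT0S); rewrite eT0 !inE eqxx orbT.
have hPY : P \subset Y.
  apply: subset_trans (mcl_ext _ _); apply: (@bigcup_sup _ _ P (fun W => W \in T0) (fun W => W)).
  by rewrite eT0 !inE eqxx.
have hQY : Q \subset Y.
  apply: subset_trans (mcl_ext _ _); apply: (@bigcup_sup _ _ Q (fun W => W \in T0) (fun W => W)).
  by rewrite eT0 !inE eqxx orbT.
have eYP : Y = P by case/factorsP: (hP) => _ _ hPm; exact: hPm Y hYG hYX hPY.
have eQP : Q = P by apply: (fac_anti hQ hP); rewrite -eYP.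
by move: hPQ; rewrite eQP eqxx.
Qed.

Lemma card2_other (T : finType) (S : {set T}) a :
  #|S| = 2 -> a \in S -> exists b, [/\ b \in S, b != a & S = [set a; b]].
Proof.
move=> h2 ha.
have : #|S :\ a| == 1 by move: h2; rewrite (cardsD1 a S) ha add1n => -[->].
case/cards1P => b eb.
have hb : b \in S :\ a by rewrite eb set11.
move: (hb); rewrite inE => /andP [hba hbS].
exists b; split => //; first by move: hba; rewrite inE.
by rewrite -{1}(setD1K ha) eb.
Qed.

Lemma key_sub (E : finType) (I : {set {set E}}) (hM : is_matroid I)
  (G G' : {set {set E}}) (hG : building I G) (hG' : building I G') (hsub : G \subset G') X F :
  X \in G' :\: G -> #|factors G X| = 2 ->
  (forall Y, Y \in G' :\: G -> #|factors G Y| = 2 -> #|Y| <= #|X|) ->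
  flat I F -> F <> hat0 I -> X \subset F ->
  (forall W, W \in G -> X \subset W -> W \subset F -> False) ->
  factors G X \subset factors G F.
Proof.
rewrite inE => /andP [hXG hX'] h2 hmax hF hF0 hXF hnoW.
have [hXf hX0] := bld_elt hG' hX'.
apply/subsetP => A hA; case: (boolP (A \in factors G F)) => // hAF; exfalso.
case: (card2_other h2 hA) => B [hB hBA eS].
have hAG := fac_inH hA; have hAX := fac_subF hA.
have [hAf hA0] := bld_elt hG hAG.
case: (below_fac hAG (subset_trans hAX hXF)) => W hW hAW.
have hWA : W != A by apply/negP => /eqP e; move: hAF; rewrite -e hW.
have hWG := fac_inH hW; have hWF := fac_subF hW.
have hWX : ~~ (W \subset X).
  apply/negP => hWX; case/factorsP: hA => _ _ hm.
  by move: hWA; rewrite (hm W hWG hWX hAW) eqxx.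
set J := mcl I (X :|: W).
have hJf : flat I J by apply: flat_mcl.
have hXJ : X \subset J by apply: subset_trans (subsetUl X W) (mcl_ext _ _).
have hWJ : W \subset J by apply: subset_trans (subsetUr X W) (mcl_ext _ _).
have hJF : J \subset F by apply: mcl_min => //; rewrite subUset hXF.
have hJ' : J \in G'.
  apply: (bld_join hM hG' hX' (subsetP hsub W hWG) hAf hA0 hAX hAW).
have hJG : J \notin G by apply/negP => hJG; apply: (hnoW J hJG hXJ hJF).
have hJ0 : J <> hat0 I.
  by move=> e; apply: hX0; apply: eq_hat0 => //; rewrite -e.
have hWfJ : W \in factors G J.
  apply/factorsP; split => // Y hY hYJ hWY.
  by case/factorsP: hW => _ _ hm; apply: hm => //; apply: subset_trans hYJ hJF.
have hBG := fac_inH hB.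
case: (below_fac hBG (subset_trans (fac_subF hB) hXJ)) => B' hB' hBB'.
have hB'W : W != B'.
  apply/negP => /eqP e; subst B'.
  apply: (hnoW W hWG) => //.
  rewrite -(fac_join hM hG hXf hX0); apply: (mcl_min hM); last exact: (bld_elt hG hWG).1.
  by apply/bigcupsP => Z; rewrite eS => /set2P [] ->.
have eJ : [set W; B'] = factors G J.
  apply: (fac_all hM hG hJf hJ0).
    by apply/subsetP => Z; move/set2P => [] ->.
  rewrite /J; apply: mcl_sub => //; rewrite subUset; apply/andP; split.
    rewrite -(fac_join hM hG hXf hX0); apply: mcl_mono => //.
    apply/bigcupsP => Z; rewrite eS => /set2P [] ->.
      apply: subset_trans hAW _; exact: (@bigcup_sup _ _ W (fun V => V \in [set W; B']) (fun V => V)) (setU11 _ _).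
    apply: subset_trans hBB' _; apply: (@bigcup_sup _ _ B' (fun V => V \in [set W; B']) (fun V => V)).
    by rewrite !inE eqxx orbT.
  apply: subset_trans (mcl_ext _ _).
  exact: (@bigcup_sup _ _ W (fun V => V \in [set W; B']) (fun V => V)) (setU11 _ _).
have hJ2 : #|factors G J| = 2 by rewrite -eJ cards2 hB'W.
have := hmax J; rewrite inE hJG hJ' => /(_ isT hJ2).
have hne : X != J by apply/negP => /eqP e; move: hWX; rewrite e hWJ.
by rewrite leqNgt (lt_card_sub hXJ hne).
Qed.

Lemma fac_same (E : finType) (G : {set {set E}}) (X F : {set E}) :
  X \notin G -> (X \subset F -> exists2 W, W \in G & (X \subset W) && (W \subset F)) ->
  factors (X |: G) F = factors G F.
Proof.
move=> hXG hW; apply/setP => Z; apply/factorsP/factorsP.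
  move=> [hZ hZF h]; case/setU1P: hZ => [eZ | hZ].
    subst Z; case: (hW hZF) => W hWG /andP [h1 h2].
    by move: hXG; rewrite -(h W (setU1r _ hWG) h2 h1) hWG.
  split => // Y hY; apply: h; exact: setU1r.
move=> [hZ hZF h]; split; first exact: setU1r.
  by [].
move=> Y /setU1P [eY | hY] hYF hZY; last exact: h.
subst Y; case: (hW hYF) => W hWG /andP [h1 h2].
have eW := h W hWG h2 (subset_trans hZY h1).
apply/eqP; rewrite eqEsubset hZY andbT; by rewrite -eW.
Qed.

Lemma fac_new (E : finType) (G : {set {set E}}) (X F Z : {set E}) :
  X \notin G -> X \subset F -> (forall W, W \in G -> X \subset W -> W \subset F -> False) ->
  (Z \in factors (X |: G) F) = (Z == X) || ((Z \in factors G F) && (Z \notin factors G X)).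
Proof.
move=> hXG hXF hnoW.
case: (eqVneq Z X) => [-> | hZX] /=.
  apply/factorsP; split => //; first exact: setU11.
  move=> Y /setU1P [-> // | hY] hYF hXY; exfalso; exact: hnoW Y hY hXY hYF.
apply/factorsP/andP.
  move=> [hZ hZF h]; have hZG : Z \in G by case/setU1P: hZ => // e; move: hZX; rewrite e eqxx.
  split.
    apply/factorsP; split => // Y hY; apply: h; exact: setU1r.
  apply/negP => /factorsP [_ hZX' _]; move: hZX; by rewrite (h X (setU11 _ _) hXF hZX') eqxx.
move=> [/factorsP [hZ hZF h] hZS]; split; first exact: setU1r.
  by [].
move=> Y /setU1P [eY | hY] hYF hZY; last exact: h.
subst Y; exfalso; move/negP: hZS; apply; apply/factorsP; split => // W hW hWX hZW.
apply: h => //; exact: subset_trans hWX hXF.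
Qed.

Lemma addable (E : finType) (I : {set {set E}}) (hM : is_matroid I)
  (G G' : {set {set E}}) (hG : building I G) (hG' : building I G') (hsub : G \subset G') X :
  X \in G' :\: G -> #|factors G X| = 2 ->
  (forall Y, Y \in G' :\: G -> #|factors G Y| = 2 -> #|Y| <= #|X|) ->
  building I (X |: G).
Proof.
move=> hXin h2 hmax; move: (hXin); rewrite inE => /andP [hXG hX'].
have [hXf hX0] := bld_elt hG' hX'.
split.
  by move=> Z /setU1P [-> | hZ]; [exact: (bld_elt hG' hX') | exact: (bld_elt hG hZ)].
move=> F hF hF0; cbv zeta.
case: (boolP ((X \subset F) ==> [exists W in G, (X \subset W) && (W \subset F)])) => hc.
  rewrite fac_same //; first exact: (proj2 hG) F hF hF0.
  move=> hXF; move: hc; rewrite hXF /= => /exists_inP [W hW hW2]; by exists W.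
move: hc; rewrite negb_imply => /andP [hXF /exists_inP hno].
have hnoW : forall W, W \in G -> X \subset W -> W \subset F -> False.
  by move=> W hW h1 h3; apply: hno; exists W => //; rewrite h1 h3.
have hS := key_sub hM hG hG' hsub hXin h2 hmax hF hF0 hXF hnoW.
set S := factors G X in hS *.
set M := factors G F in hS *.
have hM'E : forall Z, (Z \in factors (X |: G) F) = (Z == X) || ((Z \in M) && (Z \notin S)).
  by move=> Z; rewrite fac_new.
set M' := factors (X |: G) F in hM'E *.
have hXM' : X \in M' by rewrite hM'E eqxx.
have hXM : X \notin M by apply/negP => h; move: hXG; rewrite (fac_inH h).
split.
  move=> Y hY hYF; case: (bld_surj hG hF hF0 hY hYF) => x [hx hxY].
  exists (fun Z => if Z == X then join_fam I S x else x Z); split.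
    move=> Z; rewrite hM'E => /orP [/eqP -> | /andP [hZ _]].
      rewrite eqxx; split; first exact: flat_mcl.
      apply: mcl_min => //; apply/bigcupsP => W hW.
      exact: subset_trans (hx W (subsetP hS W hW)).2 (fac_subF hW).
    have -> : (Z == X) = false by apply/negP => /eqP e; move: hXM; rewrite -e hZ.
    exact: hx.
  rewrite -hxY; apply/eqP; rewrite eqEsubset; apply/andP; split.
    apply: jf_le => // Z; rewrite hM'E => /orP [/eqP -> | /andP [hZ _]].
      rewrite eqxx; apply: jf_le => // W hW; apply: jf_sub; exact: subsetP hS W hW.
    have -> : (Z == X) = false by apply/negP => /eqP e; move: hXM; rewrite -e hZ.
    exact: jf_sub.
  apply: jf_le => // Z hZ; case: (boolP (Z \in S)) => hZS.
    apply: subset_trans (jf_sub I x hZS) _.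
    by have := jf_sub I (fun Z => if Z == X then join_fam I S x else x Z) hXM'; rewrite eqxx.
  have hZM' : Z \in M' by rewrite hM'E hZ hZS orbT.
  have hZX : (Z == X) = false by apply/negP => /eqP e; move: hXM; rewrite -e hZ.
  by have := jf_sub I (fun Z => if Z == X then join_fam I S x else x Z) hZM'; rewrite hZX.
move=> x' y' hx' hy'; split; last by move=> h; apply: jf_mono.
move=> hj Z hZ.
have [hx'Xf hx'XX] := hx' X hXM'.
have [hy'Xf hy'XX] := hy' X hXM'.
case: (bld_surj hG hXf hX0 hx'Xf hx'XX) => a [ha haE].
case: (bld_surj hG hXf hX0 hy'Xf hy'XX) => b [hb hbE].
have adm_gen : forall c z : {set E} -> {set E}, admissible I S c -> admissible I M' z ->
    admissible I M (fun Z => if Z \in S then c Z else z Z).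
  move=> c z hc hz W hW; case: ifP => hWS; first exact: hc.
  by apply: hz; rewrite hM'E hW hWS orbT.
have jeq : forall c z : {set E} -> {set E}, join_fam I S c = z X ->
    join_fam I M (fun Z => if Z \in S then c Z else z Z) = join_fam I M' z.
  move=> c z hcz; apply/eqP; rewrite eqEsubset; apply/andP; split.
    apply: jf_le => // W hW; case: ifP => hWS.
      apply: subset_trans (jf_sub I c hWS) _; rewrite hcz; exact: jf_sub.
    by apply: jf_sub; rewrite hM'E hW hWS orbT.
  apply: jf_le => // W; rewrite hM'E => /orP [/eqP -> | /andP [hW hWS]].
    rewrite -hcz; apply: jf_le => // V hV.
    by have := jf_sub I (fun Z => if Z \in S then c Z else z Z) (subsetP hS V hV); rewrite hV.
  by have := jf_sub I (fun Z => if Z \in S then c Z else z Z) hW; rewrite (negbTE hWS).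
have hle := bld_refl hG hF hF0 (adm_gen a x' ha hx') (adm_gen b y' hb hy').
have hle' := hle (ltac:(by rewrite (jeq a x' haE) (jeq b y' hbE))).
move: hZ; rewrite hM'E => /orP [/eqP -> | /andP [hZ hZS]].
  rewrite -haE -hbE; apply: jf_mono => // W hW.
  by have := hle' W (subsetP hS W hW); rewrite hW.
by have := hle' Z hZ; rewrite (negbTE hZS).
Qed.

Lemma main_ind (E : finType) (I : {set {set E}}) (hM : is_matroid I) (G' : {set {set E}})
  (hG' : building I G') (hflag : flag I G') n :
  forall G, building I G -> G \subset G' -> #|G' :\: G| <= n -> binary_filtration I G G'.
Proof.
elim: n => [|n IH] G hG hsub hn.
  have e : G = G'.
    apply/eqP; rewrite eqEsubset hsub /= -setD_eq0 -cards_eq0; by rewrite leqn0 in hn.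
  subst G; exists 0, (fun _ => G'); split => //.
case: (set_0Vmem (G' :\: G)) => [e | [X0 hX0]].
  have e' : G = G' by apply/eqP; rewrite eqEsubset hsub /= -setD_eq0 e.
  subst G; exists 0, (fun _ => G'); split => //.
case: (@arg_minnP _ X0 (fun Y => Y \in G' :\: G) (fun Y => #|Y|) hX0) => X1 hX1 hX1min.
have h21 := two_factors_min hM hG hG' hsub hflag hX1 hX1min.
pose C := fun Y : {set E} => (Y \in G' :\: G) && (#|factors G Y| == 2).
have hC1 : C X1 by rewrite /C hX1 h21 eqxx.
case: (@arg_maxnP _ X1 C (fun Y => #|Y|) hC1) => X /andP [hX /eqP h2] hXmax.
have hmax : forall Y, Y \in G' :\: G -> #|factors G Y| = 2 -> #|Y| <= #|X|.
  by move=> Y hY hY2; apply: hXmax; rewrite /C hY hY2 eqxx.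
have hb := addable hM hG hG' hsub hX h2 hmax.
move: (hX); rewrite inE => /andP [hXG hX'].
have hsub' : X |: G \subset G' by rewrite subUset sub1set hX' hsub.
have hn' : #|G' :\: (X |: G)| <= n.
  have hpr : G' :\: (X |: G) \proper G' :\: G.
    rewrite properE setDS ?subsetUr //=; apply/subsetPn; exists X => //.
    by rewrite !inE eqxx.
  by have := proper_card hpr; move=> h; rewrite -ltnS; apply: leq_trans h hn.
case: (IH (X |: G) hb hsub' hn') => p [Gs [hp h0 hbs hst]].
exists p.+1, (fun i => if i <= p then Gs i else G); split.
- by rewrite ltnn.
- by [].
- move=> i hi; case: ifP => hip; [exact: hbs | exact: hG].
move=> i hi; rewrite ltnS in hi; rewrite hi.
case: (ltngtP i p) => hip.
- by apply: hst.
- by move: hi; rewrite leqNgt hip.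
subst i; rewrite ?ltnn hp; split; first exact: subsetUr.
exists X; split => //.
apply/setP => Z; rewrite !inE; case: (eqVneq Z X) => [-> | hZX] /=; first by rewrite hXG.
by rewrite andNb.
Qed.

Theorem proposition3p21 (E : finType) (I : {set {set E}})
  (hM : is_matroid I) (hL : loopless I) (G G' : {set {set E}})
  (hG : building I G) (hG' : building I G') (hsub : G \subset G')
  (hflag : flag I G') :
  binary_filtration I G G'.
Proof. exact: (main_ind hM hG' hflag hG hsub (leqnn _)). Qed.
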